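(* There exists $N_0\in\mathbb{N}$ such that for every $N\ge N_0$ the following holds. Let $y\in[0,1]$ and let $(a_i)\in\{0,1\}^{\mathbb{N}}$ be a binary expansion of $y$, i.e. $y=\sum_{i\ge1}a_i2^{-i}$, satisfying $\#\{1\le i\le n:a_i=0\}\ge 0.4\,n$ for all $n\ge N$. Then $\left[0,\frac{1}{56\cdot 2^N}\right]\subseteq K_y$, where $K_y:=\{x\in\mathbb{R}:(x,y)\in K\}$.
   Context: For $k\ge 0$ and $n\ge 1$ let $t_{k,n}:=\frac{1}{2^k n}$. Define the similarities of $\mathbb{R}^2$: $U(x,y)=\left(\frac{x}{2},\frac{y+1}{2}\right)$, $D_0(x,y)=\left(\frac{x}{2},\frac{y}{2}\right)$, and $D_{k,n}(x,y)=\left(\frac{x+t_{k,n}}{2},\frac{y}{2}\right)$ for $k\ge0,n\ge1$. $K$ is the unique non-empty compact set $K\subset\mathbb{R}^2$ satisfying $K=U(K)\cup D_0(K)\cup\bigcup_{k\ge0,n\ge1}D_{k,n}(K)$. *)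

(* Defs.v *)
From Stdlib Require Import Reals.
Open Scope R_scope.

Definition pt := (R * R)%type.

Definition Umap (p : pt) : pt := (fst p / 2, (snd p + 1) / 2).
Definition D0map (p : pt) : pt := (fst p / 2, snd p / 2).
Definition tkn (k n : nat) : R := 1 / (2 ^ k * INR n).
Definition Dmap (k n : nat) (p : pt) : pt := ((fst p + tkn k n) / 2, snd p / 2).

Definition pt_cv (u : nat -> pt) (l : pt) : Prop :=
  Un_cv (fun m => fst (u m)) (fst l) /\ Un_cv (fun m => snd (u m)) (snd l).

Definition compact2 (A : pt -> Prop) : Prop :=
  forall u : nat -> pt, (forall m, A (u m)) ->
    exists (phi : nat -> nat) (l : pt),
      (forall m, (phi m < phi (S m))%nat) /\ A l /\ pt_cv (fun m => u (phi m)) l.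

Definition IFS_fixed (K : pt -> Prop) : Prop :=
  forall p, K p <->
    ((exists q, K q /\ p = Umap q) \/
     (exists q, K q /\ p = D0map q) \/
     (exists (k n : nat) q, (1 <= n)%nat /\ K q /\ p = Dmap k n q)).

(* a : nat -> bool, only indices i >= 1 are used; true = digit 1 *)
Definition digit (b : bool) : R := if b then 1 else 0.

Fixpoint zeros_upto (a : nat -> bool) (n : nat) : nat :=
  match n with
  | O => O
  | S m => (zeros_upto a m + (if a (S m) then 0 else 1))%nat
  end.

(* Main.v *)
Require Import Defs.
From Stdlib Require Import Reals Lra Lia ZArith.
Open Scope R_scope.

Definition pick (S : R) : nat :=
  match Rlt_dec 0 S with
  | left _ => match Rle_dec S 1 with left _ => Z.to_nat (up (/ S)) | right _ => 0%nat end
  | right _ => 0%nat end.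

Definition tv (m : nat) : R := match m with O => 0 | S _ => / INR m end.

Lemma pick_nonpos S : ~ 0 < S -> pick S = 0%nat.
Proof. intros H; unfold pick; destruct (Rlt_dec 0 S); [contradiction|reflexivity]. Qed.

Lemma pick_spec S : 0 < S <= 1 ->
  pick S <> 0%nat /\ tv (pick S) = / INR (pick S) /\ 0 <= S - tv (pick S) <= S^2.
Proof.
  intros [H0 H1]. unfold pick.
  destruct (Rlt_dec 0 S) as [_|c]; [|lra].
  destruct (Rle_dec S 1) as [_|c]; [|lra].
  destruct (archimed (/ S)) as [A B].
  assert (Hz : 1 <= / S).
  { rewrite <- Rinv_1. apply Rinv_le_contravar; lra. }
  assert (Hpos : (0 <= up (/ S))%Z). { apply le_IZR. lra. }
  assert (HM : INR (Z.to_nat (up (/ S))) = IZR (up (/ S))).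
  { rewrite INR_IZR_INZ, Z2Nat.id; auto. }
  set (m := Z.to_nat (up (/ S))) in *.
  set (M := IZR (up (/ S))) in *.
  assert (Hm0 : m <> 0%nat).
  { intro E. rewrite E in HM. simpl in HM. lra. }
  assert (Htv : tv m = / INR m).
  { destruct m; [contradiction|reflexivity]. }
  split; [exact Hm0|split; [exact Htv|]].
  rewrite Htv, HM.
  assert (HS : S * / S = 1) by (field; lra).
  assert (HM1 : S * M > 1) by nra.
  assert (HM2 : S * M <= 1 + S) by nra.
  assert (HMi : M * / M = 1) by (field; lra).
  assert (M > 0) by lra.
  split; nra.
Qed.

Fixpoint ww (a : nat -> bool) (x : R) (n : nat) : R :=
  match n with O => x
  | S k => 2 * ww a x k - (if a (S k) then 0 else tv (pick (2 * ww a x k))) end.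

Lemma zeros_le a n : (zeros_upto a n <= n)%nat.
Proof. induction n; simpl; [lia|destruct (a (S n)); lia]. Qed.

Lemma key w w' (E E' n : nat) : 0 <= w -> 0 <= w' -> w' <= 4*w^2 ->
  w^2 * 2^E <= 2^(2*n) -> (4*n + E' + 2 <= 2*n + 2*E)%nat ->
  w'^2 * 2^E' <= 2^(2*S n).
Proof.
  intros H0 H0' H1 H2 H3.
  assert (Hp : 2^(4*n+E'+2) <= 2^(2*n+2*E)) by (apply Rle_pow; lra || lia).
  replace (4*n+E'+2)%nat with (2*n + 2*n + E' + 2)%nat in Hp by lia.
  replace (2*n+2*E)%nat with (2*n + E + E)%nat in Hp by lia.
  replace (2 * S n)%nat with (2*n + 2)%nat by lia.
  rewrite !pow_add in Hp. rewrite pow_add.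
  set (A := 2^E) in *. set (B := 2^(2*n)) in *. set (C := 2^E') in *.
  assert (HA : 0 < A) by (apply pow_lt; lra).
  assert (HB : 0 < B) by (apply pow_lt; lra).
  assert (HC : 0 < C) by (apply pow_lt; lra).
  simpl in Hp |- *.
  assert (Hw4 : (w^2*A)^2 <= B^2).
  { assert (0 <= w^2*A) by (apply Rmult_le_pos; [apply pow2_ge_0|lra]). nra. }
  assert (Hw' : w'^2 <= 16 * (w^2)^2) by nra.
  assert (K1 : 16 * (w^2*A)^2 * C <= 4 * B * (A*A)) by nra.
  assert (K2 : 16 * (w^2)^2 * C <= 4 * B).
  { apply Rmult_le_reg_r with (A*A); [nra|]. nra. }
  nra.
Qed.

Lemma half_bound w (E m : nat) : 0 <= w -> w^2 * 2^E <= 2^m -> (m+2 <= E)%nat -> w <= 1/2.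
Proof.
  intros H0 H1 H2.
  assert (Hp : 2^(m+2) <= 2^E) by (apply Rle_pow; lra || lia).
  rewrite pow_add in Hp. simpl in Hp.
  assert (HB : 0 < 2^m) by (apply pow_lt; lra).
  assert (w^2 * (2^m * (2*(2*1))) <= 2^m).
  { apply Rle_trans with (w^2 * 2^E); [|exact H1]. apply Rmult_le_compat_l; [apply pow2_ge_0|lra]. }
  assert (w^2 <= 1/4) by nra. nra.
Qed.

Definition Ex N a n := (3 * zeros_upto a n + 7 + 2 * Nat.max N (zeros_upto a n))%nat.

Lemma inv a x N : 0 <= x <= 1/(56*2^N) ->
  (forall n, (N <= n)%nat -> (2*n <= 5 * zeros_upto a n)%nat) ->
  forall n, 0 <= ww a x n /\ ww a x n ^2 * 2^(Ex N a n) <= 2^(2*n).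
Proof.
  intros Hx Hd. induction n as [|n [IH0 IH1]].
  - simpl. unfold Ex. simpl zeros_upto.
    rewrite Nat.max_0_r.
    replace (3*0+7+2*N)%nat with (7 + N + N)%nat by lia.
    rewrite !pow_add. split; [lra|].
    assert (HP : 0 < 2^N) by (apply pow_lt; lra).
    assert (x * (56 * 2^N) <= 1).
    { destruct Hx as [_ Hx]. unfold Rdiv in Hx. rewrite Rmult_1_l in Hx.
      apply Rmult_le_reg_r with (/ (56*2^N)). apply Rinv_0_lt_compat; lra.
      rewrite Rmult_assoc, Rinv_r by lra. lra. }
    assert (Hy : 0 <= x * 2^N <= 1/56) by (split; [apply Rmult_le_pos; lra|nra]).
    replace (2 * 0)%nat with 0%nat by lia.
    replace (x^2 * (2^7 * 2^N * 2^N)) with (128 * (x*2^N)^2) by (simpl; ring).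
    simpl. nra.
  - assert (HE : (2*n + 2 <= Ex N a n)%nat).
    { unfold Ex. destruct (le_lt_dec N n) as [h|h]; [specialize (Hd n h)|]; lia. }
    assert (Hh : ww a x n <= 1/2) by (eapply half_bound; eauto).
    simpl ww. unfold Ex in *. simpl zeros_upto.
    destruct (a (S n)) eqn:Ha.
    + rewrite Nat.add_0_r. split; [lra|].
      replace (2 * S n)%nat with (2 + 2*n)%nat by lia. rewrite (pow_add 2 2 (2*n)).
      set (E := (3 * zeros_upto a n + 7 + 2 * Nat.max N (zeros_upto a n))%nat) in *.
      replace ((2 * ww a x n - 0) ^ 2 * 2 ^ E) with (4 * (ww a x n ^ 2 * 2 ^ E)) by ring.
      replace (2^2) with 4 by ring. lra.
    + assert (Hs : 0 <= 2 * ww a x n - tv (pick (2 * ww a x n)) <= 4 * ww a x n ^2).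
      { destruct (Rlt_dec 0 (2 * ww a x n)) as [p|p].
        - destruct (pick_spec (2 * ww a x n)) as (_ & _ & h); [lra|]. nra.
        - rewrite pick_nonpos by exact p. simpl. nra. }
      split; [lra|].
      eapply key; [exact IH0|lra|lra|exact IH1|].
      destruct (le_lt_dec N n) as [h|h]; [specialize (Hd n h)|]; pose proof (zeros_le a n); lia.
Qed.

Definition cc (a : nat -> bool) (x : R) (k : nat) : nat := if a (S k) then 0%nat else pick (2 * ww a x k).
Definition TT a x k : R := tv (cc a x k).

Lemma ww_S a x k : ww a x (S k) = 2 * ww a x k - TT a x k.
Proof. simpl. unfold TT, cc. destruct (a (S k)); reflexivity. Qed.

Definition Fm (a : nat -> bool) (x : R) (k : nat) (q : pt) : pt :=
  if a (S k) then Umap q else match cc a x k with O => D0map q | m => Dmap 0 m q end.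

Fixpoint GG a x (p0 : pt) (k n : nat) : pt :=
  match n with O => p0 | S n' => Fm a x k (GG a x p0 (S k) n') end.

Lemma GG_in K a x p0 : IFS_fixed K -> K p0 -> forall n k, K (GG a x p0 k n).
Proof.
  intros HF H0 n. induction n as [|n IH]; intros k; simpl; [exact H0|].
  apply HF. unfold Fm. destruct (a (S k)).
  - left. exists (GG a x p0 (S k) n). auto.
  - destruct (cc a x k) as [|m] eqn:E.
    + right; left. exists (GG a x p0 (S k) n). auto.
    + right; right. exists 0%nat, (S m), (GG a x p0 (S k) n). split; [lia|auto].
Qed.

Lemma fst_Fm a x k q : fst (Fm a x k q) = (fst q + TT a x k) / 2.
Proof.
  unfold Fm, TT, cc. destruct (a (S k)).
  - unfold Umap, tv. simpl. lra.
  - destruct (pick (2 * ww a x k)) as [|m].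
    + unfold D0map, tv. simpl. lra.
    + unfold Dmap, tkn, tv. cbn [fst]. rewrite pow_O, Rmult_1_l. unfold Rdiv at 2. rewrite Rmult_1_l. reflexivity.
Qed.

Lemma snd_Fm a x k q : snd (Fm a x k q) = (snd q + digit (a (S k))) / 2.
Proof.
  unfold Fm. destruct (a (S k)); simpl.
  - reflexivity.
  - destruct (cc a x k); simpl; lra.
Qed.

Fixpoint yk (a : nat -> bool) (y : R) n : R :=
  match n with O => y | S k => 2 * yk a y k - digit (a (S k)) end.

Fixpoint PS (a : nat -> bool) n : R :=
  match n with O => 0 | S k => PS a k + digit (a (S k)) / 2 ^ (S k) end.

Lemma GG_fst a x p0 : forall n k, fst (GG a x p0 k n) - ww a x k = (fst p0 - ww a x (k+n)) * (/2)^n.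
Proof.
  induction n as [|n IH]; intros k.
  - rewrite Nat.add_0_r. simpl. ring.
  - simpl GG. rewrite fst_Fm. rewrite Nat.add_succ_r. specialize (IH (S k)).
    simpl plus in IH. pose proof (ww_S a x k).
    set (g := fst (GG a x p0 (S k) n)) in *. set (X := (fst p0 - ww a x (S (k + n))) * (/ 2) ^ n) in *.
    replace ((fst p0 - ww a x (S (k + n))) * (/ 2) ^ S n) with (X / 2) by (unfold X; simpl; field).
    lra.
Qed.

Lemma GG_snd a x y p0 : forall n k, snd (GG a x p0 k n) - yk a y k = (snd p0 - yk a y (k+n)) * (/2)^n.
Proof.
  induction n as [|n IH]; intros k.
  - rewrite Nat.add_0_r. simpl. ring.
  - simpl GG. rewrite snd_Fm. rewrite Nat.add_succ_r. specialize (IH (S k)).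
    simpl plus in IH. assert (H : yk a y (S k) = 2 * yk a y k - digit (a (S k))) by reflexivity.
    set (g := snd (GG a x p0 (S k) n)) in *. set (X := (snd p0 - yk a y (S (k + n))) * (/ 2) ^ n) in *.
    replace ((snd p0 - yk a y (S (k + n))) * (/ 2) ^ S n) with (X / 2) by (unfold X; simpl; field).
    lra.
Qed.

Lemma yk_PS a y : forall n, yk a y n * (/2)^n = y - PS a n.
Proof.
  induction n as [|n IH]; [simpl; ring|].
  simpl yk. simpl PS. replace (y - (PS a n + digit (a (S n)) / (2 * 2 ^ n))) with (y - PS a n - digit (a (S n)) * (/2)^n / 2).
  - rewrite <- IH. simpl. field.
  - rewrite pow_inv. field. apply pow_nonzero. lra.
Qed.

Lemma PS_sum a n : PS a (S n) = sum_f_R0 (fun i => digit (a (S i)) / 2 ^ (S i)) n.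
Proof. induction n as [|n IH]; [simpl; ring|]. rewrite tech5, <- IH. reflexivity. Qed.

Lemma geo_small eps : eps > 0 -> exists N, forall n, (n >= N)%nat -> (/2)^n < eps.
Proof.
  intros He. destruct (pow_lt_1_zero (/2)) with eps as [N HN]; auto.
  { rewrite Rabs_pos_eq; lra. }
  exists N. intros n Hn. specialize (HN n Hn). rewrite Rabs_pos_eq in HN; auto.
  apply pow_le; lra.
Qed.

Lemma cv_geo (u : nat -> R) l C : 0 <= C -> (forall n, Rabs (u n - l) <= C * (/2)^n) -> Un_cv u l.
Proof.
  intros HC H eps He.
  destruct (geo_small (eps / (C+1))) as [N HN].
  { apply Rdiv_lt_0_compat; lra. }
  exists N. intros n Hn. unfold Rdist. specialize (HN n Hn). specialize (H n).
  assert (0 <= (/2)^n) by (apply pow_le; lra).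
  assert ((C+1) * (/2)^n < eps).
  { apply Rmult_lt_reg_r with (/(C+1)). apply Rinv_0_lt_compat; lra.
    replace ((C + 1) * (/ 2) ^ n * / (C + 1)) with ((/2)^n) by (field; lra). exact HN. }
  nra.
Qed.

Lemma subseq (u : nat -> R) l phi : Un_cv u l -> (forall m, (m <= phi m)%nat) -> Un_cv (fun m => u (phi m)) l.
Proof.
  intros H Hp eps He. destruct (H eps He) as [N HN]. exists N. intros n Hn.
  apply HN. specialize (Hp n). lia.
Qed.

Lemma incr_ge phi : (forall m, (phi m < phi (S m))%nat) -> forall m, (m <= phi m)%nat.
Proof. intros H m. induction m; [lia|]. specialize (H m). lia. Qed.

Theorem mainTheorem9 :
  forall K : pt -> Prop,
    (exists p, K p) -> compact2 K -> IFS_fixed K ->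
    exists N0 : nat, forall N : nat, (N0 <= N)%nat ->
      forall (y : R) (a : nat -> bool),
        0 <= y <= 1 ->
        infinite_sum (fun i => digit (a (S i)) / 2 ^ (S i)) y ->
        (forall n : nat, (N <= n)%nat -> INR (zeros_upto a n) >= 2 / 5 * INR n) ->
        forall x : R, 0 <= x <= 1 / (56 * 2 ^ N) -> K (x, y).
Proof.
  intros K [p0 Hp0] Hc HF. exists 0%nat. intros N _ y a Hy Hsum Hd x Hx.
  assert (Hd' : forall n, (N <= n)%nat -> (2*n <= 5 * zeros_upto a n)%nat).
  { intros n Hn. specialize (Hd n Hn). apply INR_le. rewrite !mult_INR. simpl. lra. }
  pose proof (inv a x N Hx Hd') as Hinv.
  assert (Hw : forall n, 0 <= ww a x n <= 1).
  { intros n. destruct (Hinv n) as [h1 h2]. split; auto.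
    assert (ww a x n <= 1/2); [|lra].
    eapply half_bound; eauto. unfold Ex.
    destruct (le_lt_dec N n) as [h|h]; [specialize (Hd' n h)|]; lia. }
  set (u := GG a x p0 0).
  assert (Hu : forall m, K (u m)) by (intro m; apply GG_in; auto).
  assert (cx : Un_cv (fun n => fst (u n)) x).
  { apply cv_geo with (Rabs (fst p0) + 1).
    - pose proof (Rabs_pos (fst p0)); lra.
    - intros n. unfold u. pose proof (GG_fst a x p0 n 0) as E. simpl in E.
      replace (ww a x 0) with x in E by reflexivity. rewrite E.
      rewrite Rabs_mult. rewrite (Rabs_pos_eq ((/2)^n)) by (apply pow_le; lra).
      apply Rmult_le_compat_r; [apply pow_le; lra|].
      specialize (Hw n). unfold Rminus. eapply Rle_trans; [apply Rabs_triang|].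
      rewrite Rabs_Ropp, (Rabs_pos_eq (ww a x n)) by lra. lra. }
  assert (cy : Un_cv (fun n => snd (u n)) y).
  { intros eps He.
    destruct (Hsum (eps/2)) as [N1 HN1]; [lra|].
    destruct (geo_small (eps / 2 / (Rabs (snd p0) + 1))) as [N2 HN2].
    { apply Rdiv_lt_0_compat; [lra|]. pose proof (Rabs_pos (snd p0)); lra. }
    exists (S (N1 + N2)). intros n Hn.
    destruct n as [|n']; [lia|].
    assert (Hs : snd (u (S n')) = snd p0 * (/2)^(S n') + PS a (S n')).
    { unfold u. pose proof (GG_snd a x y p0 (S n') 0) as E. simpl plus in E.
      pose proof (yk_PS a y (S n')) as E2. simpl yk in E at 1. lra. }
    unfold Rdist. rewrite Hs, PS_sum.
    specialize (HN1 n' ltac:(lia)). unfold Rdist in HN1.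
    specialize (HN2 (S n') ltac:(lia)).
    assert (Hg : Rabs (snd p0 * (/2)^(S n')) < eps/2).
    { rewrite Rabs_mult, (Rabs_pos_eq ((/2)^(S n'))) by (apply pow_le; lra).
      pose proof (Rabs_pos (snd p0)).
      assert (0 <= (/2)^(S n')) by (apply pow_le; lra).
      assert ((Rabs (snd p0) + 1) * (/2)^(S n') < eps/2).
      { apply Rmult_lt_reg_r with (/(Rabs (snd p0) + 1)). apply Rinv_0_lt_compat; lra.
        replace ((Rabs (snd p0) + 1) * (/ 2) ^ S n' * / (Rabs (snd p0) + 1)) with ((/2)^(S n')) by (field; lra).
        exact HN2. }
      nra. }
    replace (snd p0 * (/ 2) ^ S n' + sum_f_R0 (fun i : nat => digit (a (S i)) / 2 ^ S i) n' - y)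
      with (snd p0 * (/ 2) ^ S n' + (sum_f_R0 (fun i : nat => digit (a (S i)) / 2 ^ S i) n' - y)) by ring.
    eapply Rle_lt_trans; [apply Rabs_triang|]. lra. }
  destruct (Hc u Hu) as (phi & l & Hphi & Hl & H1 & H2).
  pose proof (incr_ge phi Hphi) as Hge.
  assert (E1 : fst l = x) by (eapply UL_sequence; [exact H1|exact (subseq _ _ _ cx Hge)]).
  assert (E2 : snd l = y) by (eapply UL_sequence; [exact H2|exact (subseq _ _ _ cy Hge)]).
  destruct l as [l1 l2]. simpl in E1, E2. subst. exact Hl.
Qed.
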